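(* Let $U$ be a Hilbert space, $T: U\rightrightarrows U$, $(\hat u,\hat w)\in\operatorname{graph}T$, and $\Xi,N,M\in\mathcal{L}(U;U)$ with $M\ge\Xi\ge0$. If $(\Xi, M-\Xi)\in\mathcal{P}(T^{-1}(\hat w),\hat u)$, then $(N,\Xi)$-strong submonotonicity of $T$ at $(\hat u,\hat w)$ implies $(\Xi,N,M)$-partial strong submonotonicity of $T$ at $(\hat u,\hat w)$. If $T^{-1}(\hat w)=\{\hat u\}$ is a singleton, these two properties are equivalent (and $(\Xi,M-\Xi)\in\mathcal{P}(T^{-1}(\hat w),\hat u)$ holds).
   Context: For $T\in\mathcal{L}(U;U)$: $\langle x,z\rangle_T:=\langle Tx,z\rangle$, $\|x\|^2_T:=\langle Tx,x\rangle$, $\operatorname{dist}^2_T(z,A):=\inf_{u\in A}\|z-u\|^2_T$; $T\ge S$ means $T-S$ positive semidefinite. For $\Xi,N,M\in\mathcal{L}(U;U)$ with $M\ge0$, $T$ is $(\Xi,N,M)$-partially strongly submonotone at $(\hat u,\hat w)$ if there is a neighbourhood $\mathcal{U}\ni\hat u$ with $\inf_{u^*\in T^{-1}(\hat w)}(\langle w-\hat w,u-u^*\rangle_N + \|u-u^*\|^2_{M-\Xi}) \ge \operatorname{dist}^2_M(u,T^{-1}(\hat w))$ for all $u\in\mathcal{U}$, $w\in T(u)$. $T$ is $(N,M)$-strongly submonotone if it is $(M,N,M)$-partially strongly submonotone. For $M,M'\in\mathcal{L}(U;U)$, $A\subset U$ and $\hat u\in A$, one writes $(M,M')\in\mathcal{P}(A,\hat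 u)$ if there is a neighbourhood $\mathcal{U}'\ni\hat u$ such that each $u\in\mathcal{U}'$ has a common projection onto $A$ with respect to $\|\cdot\|_M$ and $\|\cdot\|_{M'}$, i.e. some $u^*\in A$ minimises both $\|u-\cdot\|_M$ and $\|u-\cdot\|_{M'}$ over $A$. *)

(* Defs.v *)
From HB Require Import structures.
From mathcomp Require Import all_boot all_order all_algebra.
From mathcomp Require Import all_classical all_reals all_analysis.
Set Implicit Arguments. Unset Strict Implicit. Unset Printing Implicit Defensive.
Import Order.TTheory GRing.Theory Num.Theory.
Import numFieldNormedType.Exports.
Local Open Scope classical_set_scope.
Local Open Scope ring_scope.

Definition hilbert_ip (R : realType) (U : completeNormedModType R)
  (ip : U -> U -> R) : Prop :=
  [/\ forall x y, ip x y = ip y x,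
      forall a x y z, ip (a *: x + y) z = a * ip x z + ip y z
    & forall x, ip x x = `|x| ^+ 2].

Definition bounded_linear (R : realType) (U : completeNormedModType R)
  (A : U -> U) : Prop :=
  (forall a x y, A (a *: x + y) = a *: A x + A y) /\ continuous A.

Definition op_sub (R : realType) (U : completeNormedModType R) (A B : U -> U)
  : U -> U := fun x => A x - B x.

Definition ipT (R : realType) (U : completeNormedModType R) (ip : U -> U -> R)
  (T : U -> U) (x z : U) : R := ip (T x) z.
Definition sqnormT (R : realType) (U : completeNormedModType R)
  (ip : U -> U -> R) (T : U -> U) (x : U) : R := ip (T x) x.
Definition normT (R : realType) (U : completeNormedModType R)
  (ip : U -> U -> R) (T : U -> U) (x : U) : R := Num.sqrt (sqnormT ip T x).

Definition op_ge (R : realType) (U : completeNormedModType R)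
  (ip : U -> U -> R) (T S : U -> U) : Prop :=
  forall x, 0 <= sqnormT ip (op_sub T S) x.

Definition dist2T (R : realType) (U : completeNormedModType R)
  (ip : U -> U -> R) (T : U -> U) (z : U) (A : set U) : \bar R :=
  ereal_inf [set (sqnormT ip T (z - u))%:E | u in A].

Definition inv_img (R : realType) (U : completeNormedModType R)
  (T : U -> set U) (w : U) : set U := [set u | T u w].

Definition partially_strongly_submonotone (R : realType)
  (U : completeNormedModType R) (ip : U -> U -> R)
  (Xi N M : U -> U) (T : U -> set U) (hu hw : U) : Prop :=
  \forall u \near hu, forall w, T u w ->
    (ereal_inf [set (ipT ip N (w - hw) (u - us)
                     + sqnormT ip (op_sub M Xi) (u - us))%:E
               | us in inv_img T hw]
     >= dist2T ip M u (inv_img T hw))%E.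

Definition strongly_submonotone (R : realType)
  (U : completeNormedModType R) (ip : U -> U -> R)
  (N M : U -> U) (T : U -> set U) (hu hw : U) : Prop :=
  partially_strongly_submonotone ip M N M T hu hw.

Definition common_proj (R : realType) (U : completeNormedModType R)
  (ip : U -> U -> R) (M M' : U -> U) (A : set U) (hu : U) : Prop :=
  \forall u \near hu, exists2 us, A us &
    (forall v, A v -> normT ip M (u - us) <= normT ip M (u - v)) /\
    (forall v, A v -> normT ip M' (u - us) <= normT ip M' (u - v)).

(* Main.v *)
Require Import Defs.
From HB Require Import structures.
From mathcomp Require Import all_boot all_order all_algebra.
From mathcomp Require Import all_classical all_reals all_analysis.
Import Order.TTheory GRing.Theory Num.Theory.
Import numFieldNormedType.Exports.
Local Open Scope classical_set_scope.
Local Open Scope ring_scope.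

Section H.
Variables (R : realType) (U : completeNormedModType R) (ip : U -> U -> R).
Hypothesis Hip : hilbert_ip ip.

Lemma ip0l z : ip 0 z = 0.
Proof.
case: Hip => _ Hl _.
have := Hl 1 0 0 z; rewrite scale1r addr0 mul1r => /eqP.
by rewrite -subr_eq subrr eq_sym => /eqP.
Qed.

Lemma ipBl a b z : ip (a - b) z = ip a z - ip b z.
Proof.
case: Hip => _ Hl _.
have h := Hl (-1) b b z.
rewrite scaleN1r addNr ip0l mulN1r in h.
have e : ip (- b) z = - ip b z.
  have := Hl 1 (-b) b z; rewrite scale1r addNr ip0l mul1r.
  by move/eqP; rewrite eq_sym addr_eq0 => /eqP.
have := Hl 1 a (-b) z; rewrite scale1r mul1r e.
by [].
Qed.

Lemma sq_split (M Xi : U -> U) x :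
  sqnormT ip M x = sqnormT ip Xi x + sqnormT ip (op_sub M Xi) x.
Proof. rewrite /sqnormT /op_sub ipBl; by rewrite addrC subrK. Qed.

Lemma sq_zero (Xi : U -> U) x : sqnormT ip (op_sub Xi Xi) x = 0.
Proof. by rewrite /sqnormT /op_sub subrr ip0l. Qed.

Lemma norm_mono (P : U -> U) a b :
  op_ge ip P (fun=> 0) -> normT ip P a <= normT ip P b ->
  sqnormT ip P a <= sqnormT ip P b.
Proof.
move=> Hp; rewrite /normT ler_sqrt //.
have := Hp b; by rewrite /sqnormT /op_sub subr0.
Qed.
End H.

Theorem proposition4p3 (R : realType) (U : completeNormedModType R)
  (ip : U -> U -> R) (T : U -> set U) (hu hw : U) (Xi N M : U -> U) :
  hilbert_ip ip ->
  T hu hw ->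
  bounded_linear Xi -> bounded_linear N -> bounded_linear M ->
  op_ge ip M Xi -> op_ge ip Xi (fun=> 0) ->
  (common_proj ip Xi (op_sub M Xi) (inv_img T hw) hu ->
     strongly_submonotone ip N Xi T hu hw ->
     partially_strongly_submonotone ip Xi N M T hu hw) /\
  (inv_img T hw = [set hu] ->
     (strongly_submonotone ip N Xi T hu hw <->
        partially_strongly_submonotone ip Xi N M T hu hw) /\
     common_proj ip Xi (op_sub M Xi) (inv_img T hw) hu).
Proof.
move=> Hip Thu _ _ _ HMX HX.
have HMX0 : op_ge ip (op_sub M Xi) (fun=> 0).
  by move=> x; have := HMX x; rewrite /sqnormT /op_sub subr0.
split.
  move=> Hcp Hss.
  rewrite /partially_strongly_submonotone.
  apply: filterS2 Hcp Hss => u [us Aus [p1 p2]] Hs w Tuw.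
  have Hs' := Hs w Tuw.
  apply/ereal_infP => _ [v Av <-].
  apply: (@le_trans _ _ (sqnormT ip M (u - us))%:E).
    by apply: ge_ereal_inf; exists (sqnormT ip M (u - us))%:E => //; exists us.
  rewrite (@sq_split _ _ _ Hip M Xi) lee_fin lerD //; last first.
    exact: @norm_mono _ _ _ _ _ _ HMX0 (p2 v Av).
  have h1 : ((sqnormT ip Xi (u - us))%:E <= dist2T ip Xi u (inv_img T hw))%E.
    apply/ereal_infP => _ [v' Av' <-]; rewrite lee_fin.
    exact: @norm_mono _ _ _ _ _ _ HX (p1 v' Av').
  have h2 := le_trans h1 Hs'.
  have h3 : (ereal_inf [set (ipT ip N (w - hw) (u - us0)
                     + sqnormT ip (op_sub Xi Xi) (u - us0))%:E
               | us0 in inv_img T hw] <= (ipT ip N (w - hw) (u - v))%:E)%E.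
    apply: ge_ereal_inf; exists (ipT ip N (w - hw) (u - v) + sqnormT ip (op_sub Xi Xi) (u - v))%:E.
      by exists v.
    by rewrite (@sq_zero _ _ _ Hip) addr0.
  by rewrite -lee_fin (le_trans h2 h3).
move=> HA; split; last first.
  rewrite /common_proj HA; apply: nearW => u; exists hu => //.
  by split => v ->.
rewrite /partially_strongly_submonotone /strongly_submonotone
  /partially_strongly_submonotone /dist2T HA.
split; apply: filterS => u H w Tuw; have := H w Tuw;
  rewrite !image_set1 !ereal_inf1 !lee_fin;
  have e := @sq_split _ _ _ Hip M Xi (u - hu);
  have z := @sq_zero _ _ _ Hip Xi (u - hu);
  rewrite e z addr0 lerD2r //.
Qed.
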